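(* Let $(q_n)_{n\geq1}$ be nonnegative reals with $\sum_{n\geq1}q_n=1$ and let $f(x)=\sum_{n\geq1}q_nx^n$ for $x\in[0,1]$. Let $k\geq1$ and let $(p_w)$ be reals in $[0,1]$ indexed by words $w$ over $\{0,1\}$ with $l(w)\leq k-1$. Define functions $f_w$ on $[0,1]$ for words of length at most $k$ by $f_\emptyset=f$ and $$f_{w1}(x)=f_w(p_wx+1-p_w)-f_w(1-p_w),\qquad f_{w0}(x)=f_w((1-p_w)x).$$ Define $\delta_\emptyset=1$, $\delta_{w0}=(1-p_w)\delta_w$, $\delta_{w1}=p_w\delta_w$, and $y_w=\sum_{v:\ l(v)=l(w),\ \#(v)<\#(w)}\delta_v$. Then for every word $w$ of length at most $k$ and every $x\in[0,1]$, $$f'_w(x)=\delta_w\,f'(y_w+\delta_wx).$$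
   Context: Words are finite sequences over $\{0,1\}$; $\emptyset$ is the empty word, $l(w)$ its length, $w0$, $w1$ denote appending a letter. $\#(w)$ is the integer whose binary representation is $w$, first letter most significant. Each $f_w$ is a power series with nonnegative coefficients converging on $[0,1]$; derivatives are the termwise differentiated series, whose value at $x=1$ is taken in $[0,+\infty]$. *)

(* Defs.v *)
From HB Require Import structures.
From mathcomp Require Import all_boot all_order all_algebra.
From mathcomp Require Import all_classical all_reals all_analysis.
Set Implicit Arguments. Unset Strict Implicit. Unset Printing Implicit Defensive.
Import Order.TTheory GRing.Theory Num.Theory numFieldNormedType.Exports.
Local Open Scope ring_scope.

(* Words over {0,1} are [seq bool]; [false] = letter 0, [true] = letter 1.
   Appending a letter a to w is [rcons w a]. *)

(* #(w): integer with binary representation w, first letter most significant *)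
Definition wnum (w : seq bool) : nat := foldl (fun acc (b : bool) => acc.*2 + b) 0 w.

Section Words.
Variable R : realType.

Definition pser (c : nat -> R) (x : R) : R := limn (series (fun n => c n * x ^+ n)).

Definition dpser (c : nat -> R) (x : R) : \bar R :=
  (\sum_(0 <= n <oo) ((n%:R * c n * x ^+ n.-1)%:E))%E.

Variables (f : R -> R) (p : seq bool -> R).

(* f_w defined by recursion on the reversed word (last letter first) *)
Fixpoint frev (rw : seq bool) : R -> R :=
  match rw with
  | [::] => f
  | b :: rw' =>
      let u := rev rw' in
      if b then fun x => frev rw' (p u * x + 1 - p u) - frev rw' (1 - p u)
      else fun x => frev rw' ((1 - p u) * x)
  end.
Definition fw (w : seq bool) : R -> R := frev (rev w).

Fixpoint deltarev (rw : seq bool) : R :=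
  match rw with
  | [::] => 1
  | b :: rw' => (if b then p (rev rw') else 1 - p (rev rw')) * deltarev rw'
  end.
Definition delta (w : seq bool) : R := deltarev (rev w).

Definition yw (w : seq bool) : R :=
  \sum_(v : (size w).-tuple bool | (wnum v < wnum w)%N) delta v.

End Words.

(* Main.v *)
Require Import Defs.
From HB Require Import structures.
From mathcomp Require Import all_boot all_order all_algebra.
From mathcomp Require Import all_classical all_reals all_analysis.
From mathcomp Require Import zify ring lra.
Set Implicit Arguments. Unset Strict Implicit. Unset Printing Implicit Defensive.
Import Order.TTheory GRing.Theory Num.Theory numFieldNormedType.Exports.
Local Open Scope ring_scope.

Lemma wnum_rcons w b : wnum (rcons w b) = ((wnum w).*2 + b)%N.
Proof. by rewrite /wnum foldl_rcons. Qed.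

Lemma wnum_inj (u v : seq bool) : size u = size v -> wnum u = wnum v -> u = v.
Proof.
elim/last_ind: u v => [|u a IH] v.
  by case: v.
case/lastP: v => [|v b]; first by rewrite size_rcons.
rewrite !size_rcons !wnum_rcons => /eqP; rewrite eqSS => /eqP suv E.
have Eab : a = b.
  have := congr1 odd E; rewrite !oddD !odd_double /=.
  by case: a E; case: b.
rewrite -Eab in E *; congr rcons; apply: IH => //.
by move/eqP: E; rewrite eqn_add2r -!muln2 eqn_pmul2r // => /eqP.
Qed.

Lemma sum_tuple_rcons (V : nmodType) n (G : n.+1.-tuple bool -> V) :
  \sum_(v : n.+1.-tuple bool) G v =
  \sum_(u : n.-tuple bool) (G [tuple of rcons u false] + G [tuple of rcons u true]).
Proof.
pose h (ub : n.-tuple bool * bool) : n.+1.-tuple bool := [tuple of rcons ub.1 ub.2].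
pose g (t : n.+1.-tuple bool) : n.-tuple bool * bool :=
  ([tuple of belast (thead t) (behead t)], last (thead t) (behead t)).
have hK : cancel h g.
  move=> [u b]; rewrite /g /h /=.
  have E : thead [tuple of rcons u b] :: behead [tuple of rcons u b] = rcons u b.
    exact: (esym (congr1 val (tuple_eta [tuple of rcons u b]))).
  case: u E => [[|a s] sz] /= _.
    by congr pair; apply: val_inj.
  rewrite /thead (tnth_nth false) /=; congr pair; last by rewrite last_rcons.
  by apply: val_inj => /=; rewrite belast_rcons.
have gK : cancel g h.
  move=> t; apply: val_inj; rewrite /h /g /=.
  rewrite -lastI; exact: (esym (congr1 val (tuple_eta t))).
rewrite (reindex h) /=; last by exists g => x _; [exact: hK | exact: gK].
rewrite -(pair_big xpredT xpredT (fun u b => G (h (u, b)))) /=.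
by apply: eq_bigr => u _; rewrite big_bool addrC.
Qed.


Section W.
Variable R : realType.
Variables (f : R -> R) (p : seq bool -> R).

Lemma delta_rcons w b :
  delta p (rcons w b) = (if b then p w else 1 - p w) * delta p w.
Proof. by rewrite /delta rev_rcons /= revK. Qed.

Lemma fw_rcons1 w x :
  fw f p (rcons w true) x = fw f p w (p w * x + 1 - p w) - fw f p w (1 - p w).
Proof. by rewrite /fw rev_rcons /= revK. Qed.

Lemma fw_rcons0 w x :
  fw f p (rcons w false) x = fw f p w ((1 - p w) * x).
Proof. by rewrite /fw rev_rcons /= revK. Qed.

Lemma yw_nil : yw p [::] = 0.
Proof. by rewrite /yw big_pred0. Qed.

Definition Sy n W := \sum_(v : n.-tuple bool | (wnum v < W)%N) delta p v.

Lemma yw_Sy w : yw p w = Sy (size w) (wnum w).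
Proof. by []. Qed.

Lemma Sy_rcons n W : Sy n.+1 W =
  \sum_(u : n.-tuple bool)
    ((if (wnum (rcons u false) < W)%N then delta p (rcons u false) else 0)
   + (if (wnum (rcons u true) < W)%N then delta p (rcons u true) else 0)).
Proof. by rewrite /Sy big_mkcond sum_tuple_rcons. Qed.

Lemma yw_rcons0 w : yw p (rcons w false) = yw p w.
Proof.
rewrite !yw_Sy size_rcons Sy_rcons /Sy [RHS]big_mkcond; apply: eq_bigr => u _.
rewrite !wnum_rcons !delta_rcons /=.
rewrite -!muln2 !addn0.
have [lt|ge] := ltnP (wnum u) (wnum w).
  have -> : (wnum u * 2 < wnum w * 2)%N by lia.
  have -> : (wnum u * 2 + 1 < wnum w * 2)%N by lia.
  ring.
have -> : (wnum u * 2 < wnum w * 2)%N = false by lia.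
have -> : (wnum u * 2 + 1 < wnum w * 2)%N = false by lia.
by rewrite addr0.
Qed.

Lemma yw_rcons1 w : yw p (rcons w true) = yw p w + delta p (rcons w false).
Proof.
rewrite !yw_Sy size_rcons Sy_rcons /Sy [in X in X + _]big_mkcond.
have -> : delta p (rcons w false) = \sum_(u : (size w).-tuple bool)
    (if wnum u == wnum w then delta p (rcons u false) else 0).
  rewrite (bigD1 (in_tuple w)) //= eqxx big1 ?addr0 // => u /eqP neq.
  case: ifP => // /eqP E; exfalso; apply: neq; apply: val_inj => /=.
  by apply: wnum_inj => //; rewrite size_tuple.
rewrite -big_split /=; apply: eq_bigr => u _.
rewrite !wnum_rcons !delta_rcons /=.
rewrite -!muln2.
have [lt|ge] := ltnP (wnum u) (wnum w).
  have -> : (wnum u * 2 + 0 < wnum w * 2 + 1)%N by lia.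
  have -> : (wnum u * 2 + 1 < wnum w * 2 + 1)%N by lia.
  rewrite ltn_eqF //; ring.
have -> : (wnum u * 2 + 1 < wnum w * 2 + 1)%N = false by lia.
case: (ltngtP (wnum u) (wnum w)) => [lt'|gt|eq]; first by exfalso; lia.
  have -> : (wnum u * 2 + 0 < wnum w * 2 + 1)%N = false by lia.
  by rewrite !addr0.
have -> : (wnum u * 2 + 0 < wnum w * 2 + 1)%N by lia.
by rewrite addr0 add0r.
Qed.

End W.

Section Struct.
Variable R : realType.

Lemma structure (F : R -> R) (p : seq bool -> R) (k : nat) :
  F 0 = 0 ->
  (forall w, (size w <= k.-1)%N -> 0 <= p w <= 1) ->
  forall w : seq bool, (size w <= k)%N ->
  [/\ 0 <= yw p w, 0 <= delta p w, yw p w + delta p w <= 1 &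
   forall x, fw F p w x = F (yw p w + delta p w * x) - F (yw p w)].
Proof.
move=> F0 hp; elim/last_ind => [|w b IH] hs.
  rewrite yw_nil /delta /fw /= F0; split => //; try by rewrite add0r.
  by move=> x; rewrite add0r mul1r subr0.
have hsw : (size w <= k)%N by move: hs; rewrite size_rcons; lia.
have /andP[p0 p1] : 0 <= p w <= 1 by apply: hp; move: hs; rewrite size_rcons; lia.
have [y0 d0 yd fE] := IH hsw.
case: b {hs}.
  rewrite yw_rcons1 !delta_rcons; split.
  - by apply: addr_ge0 => //; apply: mulr_ge0 => //; lra.
  - exact: mulr_ge0.
  - have : (1 - p w) * delta p w + p w * delta p w = delta p w by ring.
    lra.
  move=> x; rewrite fw_rcons1 !fE.
  have -> : yw p w + delta p w * (p w * x + 1 - p w) =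
    yw p w + (1 - p w) * delta p w + p w * delta p w * x by ring.
  have -> : yw p w + delta p w * (1 - p w) = yw p w + (1 - p w) * delta p w by ring.
  ring.
rewrite yw_rcons0 !delta_rcons; split => //.
- by apply: mulr_ge0 => //; lra.
- have : (1 - p w) * delta p w <= delta p w.
    by rewrite -[leRHS]mul1r ler_wpM2r //; lra.
  lra.
move=> x; rewrite fw_rcons0 !fE; congr (F _ - F _); ring.
Qed.
End Struct.

Local Open Scope classical_set_scope.

Section S.
Variable R : realType.

Lemma ser_E (u : nat -> R) (L : R) : series u @ \oo --> L ->
  (\sum_(n <oo) (u n)%:E = L%:E)%E.
Proof.
move=> uL.
have -> : (fun N => \sum_(0 <= n < N) (u n)%:E)%E = EFin \o series u.
  by apply/funext => N; rewrite /= sumEFin.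
by rewrite EFin_lim ?(cvg_lim _ uL) //; apply/cvg_ex; exists L.
Qed.

Lemma E_ser (u : nat -> R) (L : R) : (forall n, 0 <= u n) ->
  (\sum_(n <oo) (u n)%:E = L%:E)%E -> series u @ \oo --> L.
Proof.
move=> u0 uL.
have cu : cvgn (series u) by apply: nnseries_is_cvg => //; rewrite uL ltry.
suff <- : limn (series u) = L by [].
apply: EFin_inj; rewrite -EFin_lim // -uL.
by apply/congr_lim/funext => N; rewrite /= sumEFin.
Qed.
Lemma tailZ (c : nat -> R) (t : R) (m : nat) : (forall n, 0 <= c n) -> 0 <= t <= 1 ->
  (\sum_(m <= k <oo) (c k * t ^+ k)%:E <= (t ^+ m)%:E * \sum_(m <= k <oo) (c k)%:E)%E.
Proof.
move=> c0 /andP[t0 t1].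
rewrite -(@nneseries_addn R (fun k => (c k * t ^+ k)%:E) m); last first.
  by move=> i; rewrite lee_fin mulr_ge0 // exprn_ge0.
rewrite -(@nneseries_addn R (fun k => (c k)%:E) m); last by move=> i; rewrite lee_fin.
rewrite -(@nneseriesZl R (fun i => (c (i + m)%N)%:E) xpredT (t ^+ m) 0); last first.
  by move=> i _; rewrite lee_fin.
apply: lee_nneseries; first by move=> i _ _; rewrite lee_fin mulr_ge0 // exprn_ge0.
move=> n _; rewrite -EFinM lee_fin mulrC exprD ler_wpM2r //.
by rewrite -[leRHS]mul1r ler_wpM2r ?exprn_ge0 ?exprn_ile1.
Qed.

Lemma tail_bound (c : nat -> R) (g : R -> R) (t : R) (m : nat) :
  (forall n, 0 <= c n) ->
  (forall x, 0 <= x <= 1 -> series (fun n => c n * x ^+ n) @ \oo --> g x) ->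
  0 <= t <= 1 ->
  0 <= g t - \sum_(i < m.+1) c i * t ^+ i <= t ^+ m.+1 * g 1.
Proof.
move=> c0 hg t01; have /andP[t0 t1] := t01.
have Et := ser_E (hg t t01).
have E1 : (\sum_(n <oo) (c n)%:E = (g 1)%:E)%E.
  rewrite -(ser_E (hg 1 ltac:(lra))); apply: eq_eseriesr => n _.
  by rewrite expr1n mulr1.
rewrite (@nneseries_split R (fun n => (c n * t ^+ n)%:E) 0 m.+1) in Et; last first.
  by move=> k _; rewrite lee_fin mulr_ge0 // exprn_ge0.
rewrite (@nneseries_split R (fun n => (c n)%:E) 0 m.+1) in E1; last first.
  by move=> k _; rewrite lee_fin.
rewrite add0n in Et E1.
have Tz := tailZ m.+1 c0 t01.
have T0 : (0 <= \sum_(m.+1 <= k <oo) (c k * t ^+ k)%:E)%E.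
  by apply: nneseries_ge0 => k _ _; rewrite lee_fin mulr_ge0 // exprn_ge0.
have T10 : (0 <= \sum_(m.+1 <= k <oo) (c k)%:E)%E.
  by apply: nneseries_ge0 => k _ _; rewrite lee_fin.
have T1b : (\sum_(m.+1 <= k <oo) (c k)%:E <= (g 1)%:E)%E.
  by rewrite -E1; apply: leeDr; apply: sume_ge0 => i _; rewrite lee_fin.
rewrite sumEFin big_mkord in Et.
move: Et Tz T0 T10 T1b.
move: (\sum_(m.+1 <= k <oo) (c k * t ^+ k)%:E)%E (\sum_(m.+1 <= k <oo) (c k)%:E)%E.
move=> [r| |] [r1| |] //=.
rewrite -EFinD -EFinM !lee_fin => H1 Tz T0 T10 T1b; have HE := EFin_inj H1.
have tm0 : 0 <= t ^+ m.+1 by rewrite exprn_ge0.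
rewrite -HE; apply/andP; split; first lra.
have := ler_wpM2l tm0 T1b; lra.
Qed.

Lemma small_le0 (a G : R) : 0 <= G ->
  (forall t, 0 < t <= 1 -> a <= t * G) -> a <= 0.
Proof.
move=> G0 H; rewrite leNgt; apply/negP => a0.
have d0 : 0 < a + G + 1 by lra.
pose t := a / (a + G + 1).
have t0 : 0 < t by rewrite /t divr_gt0.
have t1 : t <= 1 by rewrite /t ler_pdivrMr // mul1r; lra.
have h := H t (introT andP (conj t0 t1)).
have e : t * G * (a + G + 1) = a * G.
  by rewrite /t; field; rewrite gt_eqF.
have h2 : a * (a + G + 1) <= t * G * (a + G + 1) by rewrite ler_pM2r.
nra.
Qed.

Lemma coef_uniq (c c' : nat -> R) (g : R -> R) :
  (forall n, 0 <= c n) -> (forall n, 0 <= c' n) ->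
  (forall x, 0 <= x <= 1 -> series (fun n => c n * x ^+ n) @ \oo --> g x) ->
  (forall x, 0 <= x <= 1 -> series (fun n => c' n * x ^+ n) @ \oo --> g x) ->
  forall n, c n = c' n.
Proof.
move=> c0 c'0 hg hg'.
have G0 : 0 <= g 1.
  have := tail_bound 0 c0 hg (ltac:(lra) : 0 <= 1 <= 1).
  rewrite big_ord1 expr0 mulr1 => /andP[h _]; have := c0 0%N; lra.
suff H : forall m n, (n < m)%N -> c n = c' n by move=> n; apply: (H n.+1).
elim=> [//|m IH] n; rewrite ltnS leq_eqVlt => /orP[/eqP->|]; last exact: IH.
have key t : 0 < t <= 1 -> `|c m - c' m| * t ^+ m <= t * g 1 * t ^+ m.
  move=> /andP[t0 t1]; have t01 : 0 <= t <= 1 by lra.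
  have := tail_bound m c0 hg t01; have := tail_bound m c'0 hg' t01.
  rewrite !big_ord_recr /=.
  have -> : \sum_(i < m) c' i * t ^+ i = \sum_(i < m) c i * t ^+ i.
    by apply: eq_bigr => i _; rewrite IH.
  set P := \sum_(i < m) c i * t ^+ i.
  move=> /andP[h1 h2] /andP[h3 h4]; rewrite exprS in h2 h4.
  have tm0 : 0 <= t ^+ m by rewrite exprn_ge0 // ltW.
  rewrite -[X in _ * X <= _](ger0_norm tm0) -normrM ler_norml; apply/andP; split; nra.
have key2 t : 0 < t <= 1 -> `|c m - c' m| <= t * g 1.
  move=> ht; have /andP[t0 _] := ht.
  by have := key t ht; rewrite ler_pM2r // exprn_gt0.
apply/eqP; rewrite -subr_eq0 -normr_le0; exact: small_le0 G0 key2.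
Qed.

End S.

Section Coef.
Variable R : realType.
Variables (y d : R).
Hypotheses (y0 : 0 <= y) (d0 : 0 <= d).

Definition bc (m n : nat) : R :=
  if n == 0%N then 0 else 'C(m, n)%:R * y ^+ (m - n) * d ^+ n.

Lemma bc_ge0 m n : 0 <= bc m n.
Proof.
rewrite /bc; case: ifP => // _.
by rewrite mulr_ge0 ?exprn_ge0 // mulr_ge0 ?exprn_ge0.
Qed.

Lemma bc_le m n : bc m n <= (y + d) ^+ m.
Proof.
rewrite /bc; case: ifP => _; first by rewrite exprn_ge0 // addr_ge0.
have [nm|mn] := leqP n m; last by rewrite bin_small // mul0r mul0r exprn_ge0 // addr_ge0.
have nm1 : (n < m.+1)%N by rewrite ltnS.
rewrite exprDn (bigD1 (Ordinal nm1)) //= -[leLHS]addr0 lerD //.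
  by rewrite -mulrA mulr_natl.
rewrite sumr_ge0 // => i _; rewrite mulrn_wge0 // mulr_ge0 ?exprn_ge0 //.
Qed.

Lemma fin_sum m x : \sum_(i < m.+1) bc m i * x ^+ i = (y + d * x) ^+ m - y ^+ m.
Proof.
rewrite exprDn big_ord_recl [in RHS]big_ord_recl /= /bc /= mul0r add0r.
rewrite subn0 expr0 mulr1 bin0 mulr1n addrC addKr.
apply: eq_bigr => i _; rewrite /bump /= add1n exprMn -mulr_natl; ring.
Qed.

Lemma fin_dsum m x :
  \sum_(i < m.+1) i%:R * bc m i * x ^+ i.-1 = d * m%:R * (y + d * x) ^+ m.-1.
Proof.
case: m => [|m].
  by rewrite big_ord1 /= !mul0r mulr0 mul0r.
rewrite big_ord_recl /= !mul0r add0r exprDn mulr_sumr.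
apply: eq_bigr => i _; rewrite /bump /= add1n /bc /= subSS.
have e : ((i.+1) * 'C(m.+1, i.+1))%:R = (m.+1 * 'C(m, i))%:R :> R.
  by rewrite -mul_bin_diag.
rewrite natrM in e.
rewrite exprMn.
transitivity ((i.+1%:R * 'C(m.+1, i.+1)%:R) * y ^+ (m - i) * d ^+ i.+1 * x ^+ i).
  ring.
rewrite e natrM exprS -[y ^+ (m - i) * _ *+ _]mulr_natl; ring.
Qed.

Lemma inner_sum m x : 0 <= x ->
  (\sum_(n <oo) (bc m n * x ^+ n)%:E = ((y + d * x) ^+ m - y ^+ m)%:E)%E.
Proof.
move=> x0.
rewrite (@nneseries_split R (fun n => (bc m n * x ^+ n)%:E) 0 m.+1); last first.
  by move=> k _; rewrite lee_fin mulr_ge0 ?bc_ge0 ?exprn_ge0.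
rewrite add0n eseries0; last first.
  move=> i hi _; rewrite /bc; case: ifP => _; first by rewrite mul0r.
  by rewrite bin_small // !mul0r.
by rewrite adde0 sumEFin big_mkord fin_sum.
Qed.

Lemma inner_dsum m x : 0 <= x ->
  (\sum_(n <oo) (n%:R * bc m n * x ^+ n.-1)%:E = (d * m%:R * (y + d * x) ^+ m.-1)%:E)%E.
Proof.
move=> x0.
rewrite (@nneseries_split R (fun n => (n%:R * bc m n * x ^+ n.-1)%:E) 0 m.+1); last first.
  by move=> k _; rewrite lee_fin mulr_ge0 ?mulr_ge0 ?bc_ge0 ?exprn_ge0.
rewrite add0n eseries0; last first.
  move=> i hi _; rewrite /bc; case: ifP => _; first by rewrite mulr0 mul0r.
  by rewrite bin_small // !mul0r mulr0 mul0r.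
by rewrite adde0 sumEFin big_mkord fin_dsum.
Qed.

End Coef.

Section Q.
Variable R : realType.
Variables (q : nat -> R) (y d : R).
Hypotheses (q0 : forall n, 0 <= q n) (q1 : (\sum_(n <oo) (q n)%:E = 1)%E).
Hypotheses (y0 : 0 <= y) (d0 : 0 <= d) (yd1 : y + d <= 1).

Definition cc (n : nat) : R := fine (\sum_(m <oo) (q m * bc y d m n)%:E)%E.

Lemma ccE n : (cc n)%:E = (\sum_(m <oo) (q m * bc y d m n)%:E)%E.
Proof.
have S0 : (0 <= \sum_(m <oo) (q m * bc y d m n)%:E)%E.
  by apply: nneseries_ge0 => k _ _; rewrite lee_fin mulr_ge0 ?bc_ge0.
have S1 : (\sum_(m <oo) (q m * bc y d m n)%:E <= \sum_(m <oo) (q m)%:E)%E.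
  apply: lee_nneseries; first by move=> k _ _; rewrite lee_fin mulr_ge0 ?bc_ge0.
  move=> m _; rewrite lee_fin -[leRHS]mulr1 ler_wpM2l //.
  apply: (le_trans (bc_le y0 d0 m n)); rewrite exprn_ile1 // addr_ge0 //.
by rewrite fineK // ge0_fin_numE // (le_lt_trans S1) // q1 ltry.
Qed.

Lemma cc_ge0 n : 0 <= cc n.
Proof. by rewrite -lee_fin ccE; apply: nneseries_ge0 => k _ _; rewrite lee_fin mulr_ge0 ?bc_ge0. Qed.

Lemma Ecc x : 0 <= x ->
  (\sum_(n <oo) (cc n * x ^+ n)%:E = \sum_(m <oo) (q m * ((y + d * x) ^+ m - y ^+ m))%:E)%E.
Proof.
move=> x0.
transitivity (\sum_(n <oo) \sum_(m <oo) (q m * bc y d m n * x ^+ n)%:E)%E.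
  apply: eq_eseriesr => n _.
  rewrite EFinM ccE muleC -nneseriesZl; last first.
    by move=> k _; rewrite lee_fin mulr_ge0 ?bc_ge0.
  by apply: eq_eseriesr => m _; rewrite -EFinM mulrC.
rewrite nneseries_interchange; last first.
  by move=> i j; rewrite lee_fin mulr_ge0 ?mulr_ge0 ?bc_ge0 ?exprn_ge0.
apply: eq_eseriesr => m _.
transitivity ((q m)%:E * \sum_(n <oo) (bc y d m n * x ^+ n)%:E)%E.
  rewrite -nneseriesZl; last by move=> k _; rewrite lee_fin mulr_ge0 ?bc_ge0 ?exprn_ge0.
  by apply: eq_eseriesr => n _; rewrite -EFinM mulrA.
by rewrite inner_sum // -EFinM.
Qed.

Lemma dcc x : 0 <= x -> dpser cc x = ((d%:E * dpser q (y + d * x))%E).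
Proof.
move=> x0; rewrite /dpser.
transitivity (\sum_(n <oo) \sum_(m <oo) (q m * (n%:R * bc y d m n * x ^+ n.-1))%:E)%E.
  apply: eq_eseriesr => n _.
  rewrite (_ : n%:R * cc n * x ^+ n.-1 = (n%:R * x ^+ n.-1) * cc n); last by ring.
  rewrite EFinM ccE -nneseriesZl; last first.
    by move=> k _; rewrite lee_fin mulr_ge0 ?bc_ge0.
  by apply: eq_eseriesr => m _; rewrite -EFinM; congr EFin; ring.
rewrite nneseries_interchange; last first.
  by move=> i j; rewrite lee_fin mulr_ge0 ?mulr_ge0 ?bc_ge0 ?exprn_ge0.
rewrite -nneseriesZl; last first.
  by move=> k _; rewrite lee_fin mulr_ge0 ?mulr_ge0 ?exprn_ge0 ?addr_ge0 ?mulr_ge0.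
apply: eq_eseriesr => m _.
transitivity ((q m)%:E * \sum_(n <oo) (n%:R * bc y d m n * x ^+ n.-1)%:E)%E.
  rewrite -nneseriesZl; last first.
    by move=> k _; rewrite lee_fin mulr_ge0 ?mulr_ge0 ?bc_ge0 ?exprn_ge0.
  by apply: eq_eseriesr => n _; rewrite -EFinM.
by rewrite inner_dsum // -!EFinM; congr EFin; ring.
Qed.

End Q.

Unset Implicit Arguments.

Theorem lemma2 (R : realType) (q : nat -> R) (k : nat) (p : seq bool -> R) :
  q 0%N = 0 ->
  (forall n, 0 <= q n) ->
  (\sum_(0 <= n <oo) (q n)%:E)%E = 1%E ->
  (1 <= k)%N ->
  (forall w, (size w <= k.-1)%N -> 0 <= p w <= 1) ->
  let f := pser q in
  forall w : seq bool, (size w <= k)%N ->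
    (exists c : nat -> R, (forall n, 0 <= c n) /\
       forall x, 0 <= x <= 1 -> series (fun n => c n * x ^+ n) @ \oo --> fw f p w x) /\
    (forall c : nat -> R, (forall n, 0 <= c n) ->
       (forall x, 0 <= x <= 1 -> series (fun n => c n * x ^+ n) @ \oo --> fw f p w x) ->
       forall x, 0 <= x <= 1 ->
         dpser c x = ((delta p w)%:E * dpser q (yw p w + delta p w * x))%E).
Proof.
move=> q00 q0 q1 k1 hp f w hw.
have F0 : f 0 = 0.
  rewrite /f /pser.
  have -> : series (fun n => q n * 0 ^+ n) = fun=> 0.
    apply/funext => N; rewrite /series /=; apply: big1 => i _.
    by case: i => [|i]; [rewrite q00 mul0r | rewrite expr0n mulr0].
  by rewrite lim_cst.
have [y0 d0 yd fE] := structure F0 hp hw.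
set y := yw p w in y0 yd fE *; set d := delta p w in d0 yd fE *.
have Fser z : 0 <= z <= 1 -> series (fun n => q n * z ^+ n) @ \oo --> f z.
  move=> /andP[z0 z1].
  have cz : cvgn (series (fun n => q n * z ^+ n)).
    apply: nnseries_is_cvg; first by move=> i; rewrite mulr_ge0 ?exprn_ge0.
    apply: (le_lt_trans (y := (\sum_(n <oo) (q n)%:E)%E)); last by rewrite q1 ltry.
    apply: lee_nneseries; first by move=> i _ _; rewrite lee_fin mulr_ge0 ?exprn_ge0.
    by move=> n _; rewrite lee_fin -[leRHS]mulr1 ler_wpM2l // exprn_ile1.
  by move/cvg_ex: cz => [l hl]; rewrite /f /pser (cvg_lim _ hl).
have hc : forall x, 0 <= x <= 1 ->
    series (fun n => cc q y d n * x ^+ n) @ \oo --> fw f p w x.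
  move=> x /andP[x0 x1]; rewrite fE; apply: E_ser.
    by move=> n; rewrite mulr_ge0 ?exprn_ge0 ?(cc_ge0 q0 q1 y0 d0 yd).
  rewrite (Ecc q0 q1 y0 d0 yd x0).
  have dx : d * x <= d by rewrite -[leRHS]mulr1 ler_wpM2l.
  have e1 := ser_E (Fser (y + d * x) ltac:(apply/andP; split; nra)).
  have e2 := ser_E (Fser y ltac:(apply/andP; split; lra)).
  have nn m : (0 <= (q m * ((y + d * x) ^+ m - y ^+ m))%:E)%E.
    rewrite EFinM; apply: mule_ge0; first by rewrite lee_fin.
    rewrite -(inner_sum y0 d0 m x0); apply: nneseries_ge0 => i _ _.
    by rewrite lee_fin mulr_ge0 ?bc_ge0 ?exprn_ge0.
  have H : (\sum_(n <oo) (q n * (y + d * x) ^+ n)%:E =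
     \sum_(n <oo) (q n * y ^+ n)%:E + \sum_(n <oo) (q n * ((y + d * x) ^+ n - y ^+ n))%:E)%E.
    rewrite -nneseriesD; last 2 first.
      by move=> i _ _; rewrite lee_fin mulr_ge0 ?exprn_ge0.
      by move=> i _ _; exact: nn.
    by apply: eq_eseriesr => n _; rewrite -EFinD; congr EFin; ring.
  rewrite e1 e2 in H; move: H.
  move: (\sum_(n <oo) (q n * ((y + d * x) ^+ n - y ^+ n))%:E)%E => [r| |] //=.
  rewrite -EFinD => H1; have H2 := EFin_inj H1; congr EFin; lra.
split; first by exists (cc q y d); split => //; exact: cc_ge0.
move=> c c0 hc' x /andP[x0 x1].
have ce := coef_uniq (cc_ge0 q0 q1 y0 d0 yd) c0 hc hc'.
rewrite -(dcc q0 q1 y0 d0 yd x0) /dpser.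
by apply: eq_eseriesr => n _; rewrite ce.
Qed.
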